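(* There exist a Stackelberg game $(G,L,F)$ and an SCE-PA $\mathbf{x}=[x_\pi]\in\mathbf{X}^{SCE\text{-}PA}$ such that there is no SCE-PA $\mathbf{x}'=[x'_\pi]\in\mathbf{X}^{SCE\text{-}PA}$ with $x'_\varnothing=x_\varnothing$ and $x'_\pi=x'_{\pi'}$ for all $\pi,\pi'\in\Pi_L$ having the same set of entries.
   Context: A finite game is $G=(N,\{S_p\}_{p\in N},\{u_p\}_{p\in N})$ with players $N=\{1,\dots,n\}$, finite nonempty strategy sets $S_p$, and utilities $u_p:S\to\mathbb{R}$ on $S=\prod_{p\in N}S_p$; write $s=(s_p,s_{-p})$ with $s_{-p}\in S_{-p}=\prod_{q\neq p}S_q$. $\mathcal{X}=\Delta(S)$ is the set of probability distributions on $S$ and $u_p(x)=\sum_{s\in S}x(s)u_p(s)$ for $x\in\mathcal{X}$. For $P\subseteq N$, $\mathcal{X}^{CE}_P$ is the set of $x\in\mathcal{X}$ such that for every $p\in P$ and all $s_p\neq s_p'\in S_p$: $\sum_{s_{-p}\in S_{-p}} x(s_p,s_{-p})\,(u_p(s_p,s_{-p})-u_p(s_p',s_{-p}))\ge 0$; $\mathcal{X}^{CE}=\mathcal{X}^{CE}_N$ is the set of correlated equilibria of $G$. A Stackelberg game (SG) is a triple $(G,L,F)$ with $L\cup F=N$ and $L\cap F=\emptyset$ (leaders and followers). For $P\subseteq N$, $\Pi_P$ is the set of ordered subsets of $P$ (finite sequences of pairwise distinct elements of $P$, including the empty sequence $\varnothing$); for $\pi\in\Pi_P$ and $p\in P$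 not occurring in $\pi$, $\pi p$ is $\pi$ with $p$ appended; when used as a set, $\pi$ means its set of entries. $\mathbf{X}=\prod_{\pi\in\Pi_L}\mathcal{X}^{CE}_{\pi\cup F}$, with elements $\mathbf{x}=[x_\pi]_{\pi\in\Pi_L}$. For $\mathbf{x}\in\mathbf{X}$ and $\pi\in\Pi_L$, $x_\pi$ is stable if $u_p(x_\pi)\ge u_p(x_{\pi p})$ for all $p\in L\setminus\pi$; $\mathbf{x}$ is stable if $x_\varnothing$ is stable, and perfectly stable if $x_\pi$ is stable for every $\pi\in\Pi_L$; $\mathbf{X}^{S}$ and $\mathbf{X}^{PS}$ denote the sets of stable and perfectly stable elements of $\mathbf{X}$. For $\mathbf{X}'\subseteq\mathbf{X}$ and $\pi\in\Pi_L$, $\mathcal{P}_{L\setminus\pi}(\mathbf{X}')$ is the set of Pareto optimal elements of $\{x'_\pi:\mathbf{x}'\in\mathbf{X}'\}$ with respect to the objectives $u_p$, $p\in L\setminus\pi$ (an element $y$ of the set is Pareto optimal if no $y'$ in the set satisfies $u_p(y')\ge u_p(y)$ for all $p\in L\setminus\pi$ with strict inequality for some such $p$). $\mathbf{x}\in\mathbf{X}$ is an SCE-PA if $\mathbf{x}\in\mathbf{X}^{PS}$ and $x_\varnothing\in\mathcal{P}_L(\mathbf{X}^{PS})$; $\mathbf{X}^{SCE\text{-}PA}$ is the set of SCE-PAs. *)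

(* Defs.v *)
From Stdlib Require Import Reals.
From mathcomp Require Import all_boot.
Set Implicit Arguments. Unset Strict Implicit. Unset Printing Implicit Defensive.
Local Open Scope R_scope.

(* A finite game: players 'I_n, strategy set of player p is 'I_(m p)
   (finite, nonempty since 0 < m p), utilities u p : profile -> R. *)
Record game := Game {
  gn : nat;
  gm : 'I_gn -> nat;
  gm_pos : forall p, (0 < gm p)%N;
  gu : 'I_gn -> {dffun forall p : 'I_gn, 'I_(gm p)} -> R }.

Definition profile (G : game) := {dffun forall p : 'I_(gn G), 'I_(gm p)}.
Definition player (G : game) := 'I_(gn G).

Definition deviate (G : game) (s : profile G) (p : player G) (t : 'I_(gm p))
  : profile G := finfun (dfwith (fun q => s q) t).

Definition rsum (G : game) (f : profile G -> R) : R :=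
  \big[Rplus/R0]_(s : profile G) f s.

Definition is_dist (G : game) (x : {ffun profile G -> R}) : Prop :=
  (forall s, (0 <= x s)) /\ rsum (fun s => x s) = 1.

Definition eutil (G : game) (p : player G) (x : {ffun profile G -> R}) : R :=
  rsum (fun s => (x s * gu p s)).

Definition inCE (G : game) (P : {set player G}) (x : {ffun profile G -> R})
  : Prop :=
  is_dist x /\
  forall p, p \in P -> forall sp sp' : 'I_(gm p), sp <> sp' ->
    (0 <= rsum (fun s => if s p == sp
                         then (x s * (gu p s - gu p (deviate s sp')))
                         else 0)).

(* Pi_P : ordered subsets of P, as duplicate-free sequences with entries in P *)
Definition inPi (G : game) (P : {set player G}) (pi : seq (player G)) : bool :=
  uniq pi && all (fun p => p \in P) pi.

(* An element [x_pi]_{pi in Pi_L}; values at sequences outside Pi_L are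
   irrelevant (never inspected). *)
Definition collection (G : game) := seq (player G) -> {ffun profile G -> R}.

Definition followers (G : game) (L : {set player G}) := ~: L.

Definition inX (G : game) (L : {set player G}) (x : collection G) : Prop :=
  forall pi, inPi L pi -> inCE ([set p in pi] :|: followers L) (x pi).

Definition stable_at (G : game) (L : {set player G}) (x : collection G)
  (pi : seq (player G)) : Prop :=
  forall p, p \in L -> p \notin pi -> (eutil p (x (rcons pi p)) <= eutil p (x pi)).

Definition perfectly_stable (G : game) (L : {set player G}) (x : collection G)
  : Prop := forall pi, inPi L pi -> stable_at L x pi.

Definition pareto_opt (G : game) (L : {set player G})
  (Xp : collection G -> Prop) (pi : seq (player G)) (y : {ffun profile G -> R})
  : Prop :=
  (exists x', Xp x' /\ x' pi = y) /\
  ~ (exists x', Xp x' /\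
      (forall p, p \in L -> p \notin pi -> (eutil p y <= eutil p (x' pi))) /\
      (exists p, p \in L /\ p \notin pi /\ (eutil p y < eutil p (x' pi)))).

Definition X_PS (G : game) (L : {set player G}) (x : collection G) : Prop :=
  inX L x /\ perfectly_stable L x.

Definition SCE_PA (G : game) (L : {set player G}) (x : collection G) : Prop :=
  X_PS L x /\ pareto_opt L (X_PS L) [::] (x [::]).

(* Main.v *)
Require Import Defs.
From HB Require Import structures.
From Stdlib Require Import Reals Lra.
From mathcomp Require Import all_boot.
Set Implicit Arguments. Unset Strict Implicit. Unset Printing Implicit Defensive.
Local Open Scope R_scope.

Lemma RplusA : associative Rplus. Proof. by move=> x y z; rewrite Rplus_assoc. Qed.
HB.instance Definition _ := Monoid.isComLaw.Build R R0 Rplus RplusA Rplus_comm Rplus_0_l.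

Definition gm3 : 'I_3 -> nat := fun _ => 2%N.
Lemma gm3_pos p : (0 < gm3 p)%N. Proof. by []. Qed.
Definition i0 : 'I_3 := @Ordinal 3 0 isT.
Definition i1 : 'I_3 := @Ordinal 3 1 isT.
Definition i2 : 'I_3 := @Ordinal 3 2 isT.
Definition b0 : 'I_2 := @Ordinal 2 0 isT.
Definition b1 : 'I_2 := @Ordinal 2 1 isT.

(* cells: Z=000 R=001 X1=010 P=011 X2=100 Q=101 F=110 Y=111 *)
Definition tbl (p : nat) (a b c : nat) : R :=
  match a, b, c with
  | 0, 0, 0 => match p with 0 => 1 | 1 => 1 | _ => 0 end
  | 0, 0, _ => match p with 0 => 0 | 1 => 0 | _ => -1 end
  | 0, _, 0 => match p with 0 => -1 | 1 => 0 | _ => 1 end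
  | 0, _, _ => match p with 0 => 1 | 1 => 0 | _ => 0 end
  | _, 0, 0 => match p with 0 => 0 | 1 => -1 | _ => 1 end
  | _, 0, _ => match p with 0 => 0 | 1 => 1 | _ => 0 end
  | _, _, 0 => match p with 0 => -2 | 1 => -2 | _ => 11 end
  | _, _, _ => match p with 0 => -1 | 1 => -1 | _ => 10 end
  end.

Definition G : game := @Game 3 gm3 gm3_pos
  (fun p s => tbl p (s i0) (s i1) (s i2)).

Definition mk (a b c : 'I_2) : profile G :=
  @finfun _ (fun p : 'I_3 => 'I_(gm3 p))
    (fun p => if val p == 0%N then a else if val p == 1%N then b else c).

Lemma mk_eta (s : profile G) : s = mk (s i0) (s i1) (s i2).
Proof.
apply/ffunP => p; rewrite ffunE.
by case: p => [[|[|[|p]]] Hp] //=; congr (s _); apply: val_inj.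
Qed.

Definition trip (t : 'I_2 * 'I_2 * 'I_2) : profile G := mk t.1.1 t.1.2 t.2.

Lemma rsum_expand (f : profile G -> R) :
  rsum f = f (mk b0 b0 b0) + f (mk b0 b0 b1) + f (mk b0 b1 b0) + f (mk b0 b1 b1)
         + f (mk b1 b0 b0) + f (mk b1 b0 b1) + f (mk b1 b1 b0) + f (mk b1 b1 b1).
Proof.
rewrite /rsum (reindex trip) /=; last first.
  exists (fun s : profile G => (s i0, s i1, s i2)) => [[[a b] c]|s] _ /=.
    by rewrite /trip /mk !ffunE.
  by rewrite /trip /= -mk_eta.
rewrite -(pair_bigA _ (fun ab c => f (trip (ab, c)))) /=.
rewrite -(pair_bigA _ (fun a b => \big[Rplus/R0]_c f (trip (a, b, c)))) /=.
rewrite !big_ord_recl !big_ord0 /trip /=.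
have -> : (lift ord0 ord0 : 'I_2) = b1 by apply: val_inj.
have -> : (ord0 : 'I_2) = b0 by apply: val_inj.
lra.
Qed.
Definition p0 : player G := i0.
Definition p1 : player G := i1.
Definition p2 : player G := i2.

Lemma dev_val (s : profile G) (p : player G) (t : 'I_(gm p)) (q : player G) :
  nat_of_ord (deviate s t q) = if p == q then nat_of_ord t else nat_of_ord (s q).
Proof.
rewrite /deviate ffunE; case: dfwithP => [|j Hne]; first by rewrite eqxx.
by rewrite (negbTE Hne).
Qed.

Lemma mk_val a b c (q : player G) :
  nat_of_ord (mk a b c q) = if q == i0 then nat_of_ord a else if q == i1 then nat_of_ord b else nat_of_ord c.
Proof. by rewrite ffunE; case: q => [[|[|[|q]]] Hq]. Qed.

Lemma gu_mk (p : player G) a b c : gu p (mk a b c) = tbl p a b c.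
Proof. by rewrite /= !mk_val. Qed.

Lemma gu_dev (p : player G) a b c (t : 'I_(gm p)) :
  gu p (deviate (mk a b c) t) =
  tbl p (if p == i0 then nat_of_ord t else a) (if p == i1 then nat_of_ord t else b)
        (if p == i2 then nat_of_ord t else c).
Proof. by rewrite /= !dev_val !mk_val; case: p t => [[|[|[|p]]] Hp] t. Qed.

Lemma mk_eqE a b c (p : player G) (sp : 'I_(gm p)) :
  (mk a b c p == sp) = (nat_of_ord (mk a b c p) == nat_of_ord sp).
Proof. by []. Qed.

Arguments mk : simpl never.

Lemma test (x : {ffun profile G -> R}) :
  0 <= rsum (fun s : profile G => if s p0 == (b1 : 'I_(gm p0))
                         then (x s * (gu p0 s - gu p0 (deviate s (b0 : 'I_(gm p0)))))
                         else 0) -> x (mk b1 b0 b0) = x (mk b1 b0 b0).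
Proof.
rewrite rsum_expand !mk_eqE !mk_val !gu_mk !gu_dev /=.
move=> H.
Show.
Abort.

Definition delta (c : profile G) : {ffun profile G -> R} :=
  [ffun s => if s == c then 1 else 0].

Lemma eutil_delta p c : eutil p (delta c) = gu p c.
Proof.
rewrite /eutil /rsum (bigD1 c) // big1 => [|s /negbTE H]; rewrite ffunE ?eqxx ?H; simpl; lra.
Qed.

Lemma CE_delta (P : {set player G}) c :
  (forall p, p \in P -> forall t : 'I_(gm p), gu p (deviate c t) <= gu p c) ->
  inCE P (delta c).
Proof.
move=> Hok; split; [split|].
- by move=> s; rewrite ffunE; case: (s == c); lra.
- rewrite /rsum (bigD1 c) // big1 => [|s /negbTE H]; rewrite ffunE ?eqxx ?H; simpl; lra.
- move=> p Hp sp sp' _; have := Hok p Hp sp'.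
  rewrite /rsum (bigD1 c) // big1 => [|s /negbTE H].
    rewrite ffunE eqxx; case: (c p == sp); simpl; lra.
  rewrite ffunE H; case: (s p == sp); lra.
Qed.

Definition cZ := mk b0 b0 b0.
Definition cX1 := mk b0 b1 b0.
Definition cP := mk b0 b1 b1.
Definition cX2 := mk b1 b0 b0.
Definition cQ := mk b1 b0 b1.
Definition cY := mk b1 b1 b1.

Definition xw (pi : seq (player G)) : {ffun profile G -> R} :=
  if pi == [::] then delta cY
  else if pi == [:: p0] then delta cX1
  else if pi == [:: p1] then delta cX2
  else if pi == [:: p0; p1] then delta cP
  else if pi == [:: p1; p0] then delta cQ
  else delta cZ.

Ltac ord3 a := let Ha := fresh "H" in case: a => [[|[|[|a]]] Ha] //.

Lemma okZ p (t : 'I_(gm p)) : gu p (deviate cZ t) <= gu p cZ.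
Proof. rewrite /cZ gu_mk gu_dev; move: t; ord3 p => t; case: t => [[|[|t]] Ht] //=; lra. Qed.
Lemma okX1 p (t : 'I_(gm p)) : p != p1 -> gu p (deviate cX1 t) <= gu p cX1.
Proof. rewrite /cX1 gu_mk gu_dev; move: t; ord3 p => t; case: t => [[|[|t]] Ht] //=; lra. Qed.
Lemma okX2 p (t : 'I_(gm p)) : p != p0 -> gu p (deviate cX2 t) <= gu p cX2.
Proof. rewrite /cX2 gu_mk gu_dev; move: t; ord3 p => t; case: t => [[|[|t]] Ht] //=; lra. Qed.
Lemma okP p (t : 'I_(gm p)) : p != p2 -> gu p (deviate cP t) <= gu p cP.
Proof. rewrite /cP gu_mk gu_dev; move: t; ord3 p => t; case: t => [[|[|t]] Ht] //=; lra. Qed.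
Lemma okQ p (t : 'I_(gm p)) : p != p2 -> gu p (deviate cQ t) <= gu p cQ.
Proof. rewrite /cQ gu_mk gu_dev; move: t; ord3 p => t; case: t => [[|[|t]] Ht] //=; lra. Qed.

Lemma memP (pi : seq (player G)) (p : player G) :
  p \in [set q in pi] :|: followers [set: player G] -> p \in pi.
Proof. by rewrite /followers in_setU in_set in_setC in_setT orbF. Qed.

Lemma inX_xw : inX [set: player G] xw.
Proof.
move=> pi _; rewrite /xw.
case: eqP => [->|_].
  by apply: CE_delta => p /memP.
case: eqP => [->|_].
  by apply: CE_delta => p /memP; rewrite inE => /eqP -> t; apply: okX1.
case: eqP => [->|_].
  by apply: CE_delta => p /memP; rewrite inE => /eqP -> t; apply: okX2.
case: eqP => [->|_].
  by apply: CE_delta => p /memP; rewrite !inE => /orP [] /eqP -> t; apply: okP.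
case: eqP => [->|_].
  by apply: CE_delta => p /memP; rewrite !inE => /orP [] /eqP -> t; apply: okQ.
by apply: CE_delta => p _ t; apply: okZ.
Qed.

Lemma eu (p : player G) a b c : eutil p (delta (mk a b c)) = tbl p a b c.
Proof. by rewrite eutil_delta gu_mk. Qed.

Lemma xw_long (a b : player G) pi p : xw (rcons (a :: b :: pi) p) = delta cZ.
Proof.
have Hr : (rcons pi p == [::]) = false by case: pi.
by rewrite /xw /= !eqseq_cons /= Hr !andbF.
Qed.

Lemma stable_xw : perfectly_stable [set: player G] xw.
Proof.
move=> pi _ p _.
case: pi => [|a [|b pi]].
- move=> _; rewrite /= /xw /=.
  ord3 p; rewrite /= /cX1 /cX2 /cY /cZ !eu /=; lra.
- ord3 a; ord3 p; rewrite /xw /= /cX1 /cX2 /cY /cZ /cP /cQ !eu /= => // _; lra.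
- rewrite xw_long /xw /=.
  case E1: ([:: a, b & pi] == [:: p0; p1]).
    rewrite (eqP E1) !inE; ord3 p => _; rewrite /cZ /cP !eu /=; lra.
  case E2: ([:: a, b & pi] == [:: p1; p0]).
    rewrite (eqP E2) !inE; ord3 p => _; rewrite /cZ /cQ !eu /=; lra.
  move=> _; rewrite !eqseq_cons /= !andbF /=; lra.
Qed.

Lemma dist8 (x : {ffun profile G -> R}) : is_dist x ->
  (0 <= x (mk b0 b0 b0) /\ 0 <= x (mk b0 b0 b1) /\ 0 <= x (mk b0 b1 b0) /\
      0 <= x (mk b0 b1 b1) /\ 0 <= x (mk b1 b0 b0) /\ 0 <= x (mk b1 b0 b1) /\
      0 <= x (mk b1 b1 b0) /\ 0 <= x (mk b1 b1 b1) /\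
   x (mk b0 b0 b0) + x (mk b0 b0 b1) + x (mk b0 b1 b0) + x (mk b0 b1 b1)
   + x (mk b1 b0 b0) + x (mk b1 b0 b1) + x (mk b1 b1 b0) + x (mk b1 b1 b1) = 1).
Proof. by case=> Hn Hs; rewrite rsum_expand in Hs; do !split. Qed.

Lemma CEexp (P : {set player G}) x (p : player G) : inCE P x -> p \in P ->
  0 <= rsum (fun s => if s p == (b1 : 'I_(gm p))
                      then (x s * (gu p s - gu p (deviate s (b0 : 'I_(gm p)))))
                      else 0).
Proof. by case=> _ H Hp; apply: H. Qed.

Lemma xw_SCE : SCE_PA [set: player G] xw.
Proof.
have HPS : X_PS [set: player G] xw by split; [apply: inX_xw | apply: stable_xw].
split => //; split; first by exists xw.
case=> x' [[HX _] [Hle [p [_ [_ Hlt]]]]].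
have [D0 [D1 [D2 [D3 [D4 [D5 [D6 [D7 DS]]]]]]]] := dist8 (proj1 (HX [::] isT)).
have H0 := Hle p0 (in_setT _) isT.
have H1 := Hle p1 (in_setT _) isT.
have H2 := Hle p2 (in_setT _) isT.
move: Hlt H0 H1 H2 D0 D1 D2 D3 D4 D5 D6 D7 DS.
rewrite /xw /= /cY !eu /eutil !rsum_expand !gu_mk /=.
ord3 p; rewrite /= => *; lra.
Qed.

Lemma inPiT (pi : seq (player G)) : uniq pi -> inPi [set: player G] pi.
Proof. move=> U; rewrite /inPi U /=; apply/allP => z _; exact: in_setT. Qed.

Lemma memT (pi : seq (player G)) (p : player G) :
  p \in pi -> p \in [set q in pi] :|: followers [set: player G].
Proof. by move=> H; rewrite in_setU in_set H. Qed.

Theorem mainTheorem9 :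
  exists (G : game) (L : {set player G}) (x : collection G),
    SCE_PA L x /\
    ~ (exists x' : collection G,
         SCE_PA L x' /\ x' [::] = x [::] /\
         forall pi pi', inPi L pi -> inPi L pi' -> pi =i pi' -> x' pi = x' pi').
Proof.
exists G, [set: player G], xw; split; first exact: xw_SCE.
case=> x' [[[HX HS] _] [Hroot Hind]].
have Heq : x' [:: p1; p0] = x' [:: p0; p1].
  by apply: Hind; [apply: inPiT | apply: inPiT | move=> z; rewrite !inE orbC].
have S1 := HS [::] (@inPiT [::] isT) p0 (in_setT _) isT.
have S2 := HS [::] (@inPiT [::] isT) p1 (in_setT _) isT.
have S3 := HS [:: p0] (@inPiT [:: p0] isT) p1 (in_setT _) isT.
have S4 := HS [:: p1] (@inPiT [:: p1] isT) p0 (in_setT _) isT.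
have S5 := HS [:: p0; p1] (@inPiT [:: p0; p1] isT) p2 (in_setT _) isT.
rewrite Heq in S4.
rewrite Hroot /xw /= /cY eu in S1.
rewrite Hroot /xw /= /cY eu in S2.
have C1 := CEexp (HX [:: p0] (@inPiT [:: p0] isT)) (@memT [:: p0] p0 isT).
have C2 := CEexp (HX [:: p1] (@inPiT [:: p1] isT)) (@memT [:: p1] p1 isT).
have C3 := CEexp (HX [:: p0; p1] (@inPiT [:: p0; p1] isT)) (@memT [:: p0; p1] p0 isT).
have C4 := CEexp (HX [:: p0; p1] (@inPiT [:: p0; p1] isT)) (@memT [:: p0; p1] p1 isT).
have C5 := CEexp (HX [:: p0; p1; p2] (@inPiT [:: p0; p1; p2] isT)) (@memT [:: p0; p1; p2] p0 isT).
have C6 := CEexp (HX [:: p0; p1; p2] (@inPiT [:: p0; p1; p2] isT)) (@memT [:: p0; p1; p2] p1 isT).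
have C7 := CEexp (HX [:: p0; p1; p2] (@inPiT [:: p0; p1; p2] isT)) (@memT [:: p0; p1; p2] p2 isT).
have [A0 [A1 [A2 [A3 [A4 [A5 [A6 [A7 AS]]]]]]]] := dist8 (proj1 (HX [:: p0] (@inPiT [:: p0] isT))).
have [B0 [B1 [B2 [B3 [B4 [B5 [B6 [B7 BS]]]]]]]] := dist8 (proj1 (HX [:: p1] (@inPiT [:: p1] isT))).
have [E0 [E1 [E2 [E3 [E4 [E5 [E6 [E7 ES]]]]]]]] := dist8 (proj1 (HX [:: p0; p1] (@inPiT [:: p0; p1] isT))).
have [F0 [F1 [F2 [F3 [F4 [F5 [F6 [F7 FS]]]]]]]] := dist8 (proj1 (HX [:: p0; p1; p2] (@inPiT [:: p0; p1; p2] isT))).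
move: S1 S2 S3 S4 S5 C1 C2 C3 C4 C5 C6 C7
  A0 A1 A2 A3 A4 A5 A6 A7 AS B0 B1 B2 B3 B4 B5 B6 B7 BS
  E0 E1 E2 E3 E4 E5 E6 E7 ES F0 F1 F2 F3 F4 F5 F6 F7 FS.
rewrite /eutil !rsum_expand !mk_eqE !mk_val !gu_mk !gu_dev /=.
move=> *; lra.
Qed.
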